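(* Let $R$ be a finite-dimensional $\mathbb{Q}$-algebra that is isomorphic to a finite product of number fields, let $\Gamma$ be a grid and let $(R,\Gamma,\{R_\gamma\}_{\gamma\in\Gamma})$ be a grid-grading of $R$. For $\gamma,\delta\in\Gamma$ we have $\langle x,y\rangle_R=0$ for all $x\in R_\gamma$, $y\in R_\delta$ if and only if $\gamma\neq\delta$ or $R_\gamma=0$.
   Context: For such $R$ and $x,y\in R$, $\langle x,y\rangle_R=\sum_{\sigma}\sigma(x)\overline{\sigma(y)}$, the sum over all ring homomorphisms $\sigma:R\to\mathbb{C}$. A grid is a quadruple $G=(S,1,D,* )$ with $1\in S$, $D\subseteq S^2$ containing $(1,s),(s,1)$ for all $s$, $*:D\to S$ with $s*1=1*s=s$, and $s*s=s$ only for $s=1$. A grid-grading of $R$ is $(R,G,\{R_g\}_{g\in G})$ with additive subgroups $R_g$ such that $\bigoplus_g R_g\to R$ is an isomorphism, $1\in R_1$, and whenever $R_gR_h\neq0$, $g*h$ is defined and $R_gR_h\subseteq R_{g*h}$. *)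

(* Defs.v *)
From Stdlib Require List.
From HB Require Import structures.
From mathcomp Require Import all_boot all_order all_algebra all_field.
Set Implicit Arguments. Unset Strict Implicit. Unset Printing Implicit Defensive.
Import Order.TTheory GRing.Theory Num.Theory.
Local Open Scope ring_scope.

(* Unital ring homomorphisms (no linearity required: ring homs between
   Q-algebras are automatically Q-linear). *)
Definition is_ringhom (A B : nzRingType) (f : A -> B) : Prop :=
  [/\ forall x y, f (x + y) = f x + f y,
      forall x y, f (x * y) = f x * f y &
      f 1 = 1].

(* R is isomorphic (as a ring) to a finite product K_0 x ... x K_(n-1) of number
   fields (finite extensions of Q): the map x |-> (phi_i x)_i is a bijective
   ring homomorphism R -> prod_i K_i. *)
Definition iso_prod_number_fields (R : falgType rat) : Prop :=
  exists (n : nat) (K : 'I_n -> fieldExtType rat) (phi : forall i, R -> K i),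
    [/\ forall i, is_ringhom (phi i),
        forall x y : R, (forall i, phi i x = phi i y) -> x = y &
        forall y : forall i, K i, exists x : R, forall i, phi i x = y i].

(* A grid (S, 1, D, * ) ; the partial operation * : D -> S is encoded as
   op : S -> S -> option S, with D = {(s,t) | op s t <> None}. *)
Record grid := Grid {
  gcarrier : Type;
  gone : gcarrier;
  gop : gcarrier -> gcarrier -> option gcarrier;
  gop1s : forall s, gop gone s = Some s;
  gops1 : forall s, gop s gone = Some s;
  gop_idem : forall s, gop s s = Some s -> s = gone
}.

Definition grid_grading (R : falgType rat) (G : grid) (Rg : gcarrier G -> R -> Prop)
  : Prop :=
  [/\
      forall g, Rg g 0 /\ (forall x y, Rg g x -> Rg g y -> Rg g (x - y)),
      (* the sum map  (+)_g Rg g -> R  is surjective *)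
      forall x : R, exists (gs : seq (gcarrier G)) (f : gcarrier G -> R),
        (forall g, List.In g gs -> Rg g (f g)) /\ x = \sum_(g <- gs) f g,
      (* ... and injective *)
      forall (gs : seq (gcarrier G)) (f : gcarrier G -> R),
        List.NoDup gs -> (forall g, List.In g gs -> Rg g (f g)) ->
        \sum_(g <- gs) f g = 0 -> forall g, List.In g gs -> f g = 0,
      Rg (gone G) 1 &
      forall g h, (exists a b, Rg g a /\ Rg h b /\ a * b <> 0) ->
        exists k, gop g h = Some k /\
          (forall a b, Rg g a -> Rg h b -> Rg k (a * b))].

(* s is an enumeration, without repetitions (up to extensional equality),
   of all ring homomorphisms R -> C  (C is modelled by algC). *)
Definition hom_enum (R : falgType rat) (s : seq (R -> algC)) : Prop :=
  [/\ forall f, List.In f s -> is_ringhom f,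
      forall i j, (i < j < size s)%N ->
        exists x, nth (fun _ => 0) s i x <> nth (fun _ => 0) s j x &
      forall f : R -> algC, is_ringhom f ->
        exists2 g, List.In g s & forall x, f x = g x].

Definition trace_pairing (R : falgType rat) (s : seq (R -> algC)) (x y : R) : algC :=
  \sum_(sigma <- s) sigma x * (sigma y)^*.

(* Main.v *)
Require Import Defs.
From HB Require Import structures.
From mathcomp Require Import all_boot all_order all_algebra all_field.
From mathcomp Require Import all_fingroup all_solvable all_character.
From mathcomp Require Import boolp.
From mathcomp Require Import zify.
From mathcomp Require Import ring.
From Stdlib Require Import Lia.
Set Implicit Arguments. Unset Strict Implicit. Unset Printing Implicit Defensive.
Import Order.TTheory GRing.Theory Num.Theory.
Local Open Scope ring_scope.

HB.instance Definition _ (G : grid) := gen_eqMixin (gcarrier G).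
HB.instance Definition _ (G : grid) := gen_choiceMixin (gcarrier G).

Lemma InP (T : eqType) (x : T) (s : seq T) : List.In x s <-> x \in s.
Proof.
elim: s => [|y s IH] //=; rewrite in_cons; split.
  by case=> [->|/IH ->]; rewrite ?eqxx ?orbT.
by case/orP=> [/eqP->|/IH]; [left|right].
Qed.

Lemma NoDupP (T : eqType) (s : seq T) : uniq s -> List.NoDup s.
Proof.
elim: s => [|y s IH] /=; first by constructor.
by case/andP=> ny us; constructor; [move/InP; apply/negP|apply: IH].
Qed.

Lemma sum_pred1_seq (T : eqType) (V : nmodType) (L : seq T) (g : T) (F : T -> V) :
  uniq L -> g \in L -> \sum_(h <- L | h == g) F h = F g.
Proof. by move=> uL gL; rewrite -big_filter filter_pred1_uniq // big_seq1. Qed.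

Lemma max_nat (P : nat -> Prop) d : P 0%N -> (forall n, P n -> (n <= d)%N) ->
  exists n, P n /\ forall m, P m -> (m <= n)%N.
Proof.
elim: d => [|d IH] P0 bnd; first by exists 0%N; split=> // m /bnd.
case: (pselect (P d.+1)) => [Pd|nPd]; first by exists d.+1; split.
apply: IH => // n Pn; have := bnd n Pn; rewrite leq_eqVlt => /orP [/eqP e|] //.
by move: Pn; rewrite e.
Qed.

Lemma fin_monoid_inv (T : finType) (mul : T -> T -> T) (one : T) :
  associative mul -> left_id one mul -> commutative mul ->
  (forall t, mul t t = t -> t = one) -> forall t, exists u, mul u t = one.
Proof.
move=> mA m1 mC idem t.
pose pw n := iter n (mul t) one.
have pwD : forall m n, pw (m + n)%N = mul (pw m) (pw n).
  by elim=> [|m IH] n; rewrite ?add0n /= ?m1 // IH mA.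
have [i [j [ij eij]]] : exists i j, (i < j)%N /\ pw i = pw j.
  pose f (k : 'I_#|T|.+1) := pw k.
  have : ~~ injectiveb f.
    apply/negP => /injectiveP inj; have := leq_card f inj.
    by rewrite card_ord ltnn.
  case/injectivePn => a [b ab fab].
  case: (ltngtP a b) => [lt|lt|e]; last by case/eqP: ab; apply: val_inj.
    by exists a, b.
  by exists b, a.
set p := (j - i)%N.
have p0 : (0 < p)%N by rewrite subn_gt0.
have per : forall r, pw (i + r + p)%N = pw (i + r)%N.
  move=> r; have -> : (i + r + p = j + r)%N by rewrite /p; lia.
  by rewrite !pwD eij.
set m := (i.+1 * p)%N.
have mi : (i <= m)%N by rewrite /m; nia.
have perm : forall q, pw (m + q * p)%N = pw m.
  elim=> [|q IH]; first by rewrite addn0.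
  have -> : (m + q.+1 * p = i + (m - i + q * p) + p)%N by lia.
  by rewrite per -IH; congr pw; lia.
have pm : pw m = one.
  by apply: idem; rewrite -pwD; exact: (perm i.+1).
have m0 : (0 < m)%N by rewrite /m muln_gt0.
have pw1 : pw 1%N = t by rewrite /= mC m1.
exists (pw m.-1); rewrite -[X in mul _ X]pw1 -pwD addn1 prednK //.
Qed.

Record fgrp := FGrp { fT : finType; fmul : fT -> fT -> fT; fone : fT; finv : fT -> fT;
  fmulA : associative fmul; fmul1 : left_id fone fmul; fmulV : left_inverse fone finv fmul }.
Definition fcar (g : fgrp) : Type := fT g.
HB.instance Definition _ g := Finite.on (fcar g).
HB.instance Definition _ g := Finite_isGroup.Build (fcar g) (@fmulA g) (@fmul1 g) (@fmulV g).

Lemma fgrp_char (g : fgrp) (C : commutative (@fmul g)) (x : fcar g) : x <> fone g ->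
  exists chi : fcar g -> algC, chi (fone g) = 1 /\ (forall a b : fcar g, chi (fmul a b) = chi a * chi b)
   /\ chi x <> 1 /\ (exists N, (0 < N)%N /\ forall a : fcar g, chi a ^+ N = 1).
Proof.
move=> nx.
pose G := [set: fcar g].
have abG : abelian G.
  by apply/centsP => a _ b _; apply: C.
have x1 : (x : fcar g) != 1%g by apply/eqP.
have : x \notin \bigcap_i cfker 'chi[G]_i.
  rewrite TI_cfker_irr; apply/set1gP => h; apply: nx; exact: h.
move=> H.
have : ~~ [forall i, x \in cfker 'chi[G]_i].
  by apply: contra H => /forallP h; apply/bigcapP => i _; exact: h i.
case/forallPn => i; rewrite cfkerEirr inE => xi.
have lin : 'chi[G]_i \is a linear_char by move/char_abelianP: abG; apply.
exists (fun a => 'chi[G]_i a); split; first exact: (lin_char1 lin).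
split; first by move=> a b; apply: (lin_charM lin); rewrite in_setT.
split; first by move=> e; move: xi; rewrite e (lin_char1 lin) eqxx.
exists #|G|; split; first exact: cardG_gt0.
move=> a; have := lin_char_unity_root lin (in_setT a).
have : (#[a]%g %| #|G|)%N by apply: order_dvdG; rewrite in_setT.
move=> /dvdnP [k ->] h.
by rewrite mulnC exprM h expr1n.
Qed.

Lemma unit_conj (z : algC) M : (0 < M)%N -> z ^+ M = 1 -> z * z^* = 1.
Proof.
move=> M0 e; have : `|z| ^+ M = 1 by rewrite -normrX e normr1.
move/eqP; rewrite pexpr_eq1 // => /eqP n1.
by rewrite -normCK n1 expr1n.
Qed.

Lemma geom0 (c : algC) M : c ^+ M = 1 -> c != 1 -> \sum_(k < M) c ^+ k = 0.
Proof.
move=> e c1; have := subrX1 c M; rewrite e subrr => /esym/eqP.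
by rewrite mulf_eq0 subr_eq0 (negbTE c1) /= => /eqP.
Qed.

Lemma In_nth_ex (T : Type) (d : T) (s : seq T) f : List.In f s ->
  exists j, (j < size s)%N /\ nth d s j = f.
Proof.
elim: s => [|g s IH] //= [->|/IH [j [js e]]]; first by exists 0%N.
by exists j.+1.
Qed.

Lemma nth_In (T : Type) (d : T) (s : seq T) j : (j < size s)%N -> List.In (nth d s j) s.
Proof. by elim: s j => [|g s IH] [|j] //= js; [left|right; apply: IH]. Qed.

Lemma hom_sum (A : nzRingType) (f : A -> algC) (I : Type) (r : seq I) (F : I -> A) :
  is_ringhom f -> f (\sum_(i <- r) F i) = \sum_(i <- r) f (F i).
Proof.
move=> [fD _ _]; have f0 : f 0 = 0 by apply/esym/(addrI (f 0)); rewrite addr0 -fD addr0.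
by elim/big_rec2: _ => [|i y x _ <-]; rewrite ?f0 // fD.
Qed.

Lemma sum_perm_homs (A : falgType rat) (s : seq (A -> algC)) (hs : hom_enum s)
  (u : (A -> algC) -> (A -> algC)) (F : (A -> algC) -> algC) :
  (forall f, is_ringhom f -> is_ringhom (u f)) ->
  (forall f f', is_ringhom f -> is_ringhom f' -> u f =1 u f' -> f =1 f') ->
  (forall f f', f =1 f' -> F f = F f') ->
  \sum_(f <- s) F (u f) = \sum_(f <- s) F f.
Proof.
case: hs => hhom hdist hcompl uh uinj Fext.
pose d : A -> algC := fun _ => 0.
rewrite [LHS](big_nth d) [RHS](big_nth d) !big_mkord.
have sh : forall i : 'I_(size s), is_ringhom (nth d s i).
  by move=> i; apply: hhom; apply: nth_In.
have ex : forall i : 'I_(size s), exists j : 'I_(size s), u (nth d s i) =1 nth d s j.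
  move=> i; have [g gs eg] := hcompl _ (uh _ (sh i)).
  have [j [js ej]] := In_nth_ex d gs.
  by exists (Ordinal js); rewrite /= ej.
pose pi i := sval (cid (ex i)).
have piP : forall i : 'I_(size s), u (nth d s i) =1 nth d s (pi i) by move=> i; exact: (svalP (cid (ex i))).
have piI : injective pi.
  move=> i i' e.
  have h : nth d s i =1 nth d s i'.
    apply: uinj; rewrite ?sh // => w; by rewrite piP e -piP.
  apply/eqP; apply: contraT => ne.
  have [lt|lt|] := ltngtP i i'; last by move/val_inj => ee; rewrite ee eqxx in ne.
    have [|w hw] := hdist i i'; first by rewrite lt /= ltn_ord.
    by case: hw; apply: h.
  have [|w hw] := hdist i' i; first by rewrite lt /= ltn_ord.
  by case: hw; symmetry; apply: h.
rewrite [RHS](reindex_inj piI) /=; apply: eq_bigr => i _.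
exact: Fext (piP i).
Qed.

Section Grading.
Variables (R : falgType rat) (G : grid) (Rg : gcarrier G -> R -> Prop).
Hypothesis hgr : grid_grading Rg.
Local Notation gc := (gcarrier G).

Lemma Rg0 g : Rg g 0. Proof. by case: hgr => h _ _ _ _; case: (h g). Qed.
Lemma RgB g x y : Rg g x -> Rg g y -> Rg g (x - y).
Proof. by case: hgr => h _ _ _ _; case: (h g) => _; apply. Qed.
Lemma RgN g x : Rg g x -> Rg g (- x).
Proof. by move=> hx; rewrite -sub0r; apply: RgB => //; apply: Rg0. Qed.
Lemma RgD g x y : Rg g x -> Rg g y -> Rg g (x + y).
Proof. by move=> hx hy; rewrite -[y]opprK; apply: RgB => //; apply: RgN. Qed.
Lemma Rg_sum (I : Type) (r : seq I) (P : pred I) (F : I -> R) g :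
  (forall i, P i -> Rg g (F i)) -> Rg g (\sum_(i <- r | P i) F i).
Proof.
move=> h; elim/big_rec: _ => [|i x Pi hx]; first exact: Rg0.
by apply: RgD => //; apply: h.
Qed.
Lemma RgMn g x n : Rg g x -> Rg g (x *+ n).
Proof. move=> hx; elim: n => [|n IH]; first by rewrite mulr0n; apply: Rg0. by rewrite mulrS; apply: RgD. Qed.
Lemma RgMz g x z : Rg g x -> Rg g (x *~ z).
Proof. by case: z => n hx; rewrite ?NegzE ?mulrNz; [apply: RgMn|apply/RgN/RgMn]. Qed.
Lemma Rg1 : Rg (gone G) 1. Proof. by case: hgr. Qed.

Lemma uniq_comp (l : seq gc) (F : gc -> R) : uniq l ->
  (forall g, g \in l -> Rg g (F g)) -> \sum_(g <- l) F g = 0 ->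
  forall g, g \in l -> F g = 0.
Proof.
case: hgr => _ _ h _ _ ul hF s0 g gl.
apply: (h l F (NoDupP ul)) => //; first by move=> g' /InP; apply: hF.
exact/InP.
Qed.

Lemma grade_uniq e e' a : a != 0 -> Rg e a -> Rg e' a -> e = e'.
Proof.
move=> a0 ha ha'; apply: contra_notP (negP a0) => ne; apply/eqP.
have nee : e != e' by apply/eqP.
pose F g := if g == e then a else - a.
have := @uniq_comp [:: e; e'] F; rewrite /= inE nee /= => /(_ isT).
have hF : forall g, g \in [:: e; e'] -> Rg g (F g).
  move=> g; rewrite !inE /F => /orP [] /eqP ->; rewrite ?eqxx //.
  by rewrite eq_sym (negbTE nee); apply: RgN.
move/(_ hF); rewrite !big_cons big_nil /F eqxx eq_sym (negbTE nee) addr0 subrr.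
by move/(_ erefl e); rewrite inE eqxx => /(_ isT).
Qed.

Lemma merge_sum (gs L : seq gc) (f : gc -> R) : uniq L -> {subset gs <= L} ->
  \sum_(g <- gs) f g = \sum_(h <- L) \sum_(g <- gs | g == h) f g.
Proof.
move=> uL sub.
transitivity (\sum_(h <- L) \sum_(g <- gs) (if g == h then f g else 0)); last first.
  by apply: eq_bigr => h _; rewrite [RHS]big_mkcond.
rewrite exchange_big /=; apply: eq_big_seq => g gin.
rewrite -big_mkcond /= (eq_bigl (fun h => h == g)); last by move=> h; rewrite eq_sym.
by rewrite sum_pred1_seq // sub.
Qed.

Lemma decomp0 (x : R) : exists (gs : seq gc) (f : gc -> R),
  (forall g, g \in gs -> Rg g (f g)) /\ x = \sum_(g <- gs) f g.
Proof.
case: hgr => _ h _ _ _; have [gs [f [hf ->]]] := h x.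
by exists gs, f; split => // g /InP; apply: hf.
Qed.

Definition mrg (gs : seq gc) (f : gc -> R) (h : gc) := \sum_(g <- gs | g == h) f g.

Lemma mrgP gs f : (forall g, g \in gs -> Rg g (f g)) -> forall h, Rg h (mrg gs f h).
Proof.
move=> hf h; rewrite /mrg big_seq_cond; apply: Rg_sum => g /andP [gin /eqP <-].
exact: hf.
Qed.

Lemma zmodrat (v : R) (n : int) : n != 0 -> v *~ n = 0 -> v = 0.
Proof.
move=> n0; rewrite -scaler_int => /eqP; rewrite scaler_eq0 intr_eq0 (negbTE n0) /=.
by move/eqP.
Qed.

Lemma RgZ e a (q : rat) : Rg e a -> Rg e (q *: a).
Proof.
move=> ha; have [gs [f [hf hz]]] := decomp0 (q *: a).
pose L := undup (e :: gs).
have uL : uniq L by apply: undup_uniq.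
have sub : {subset gs <= L} by move=> g gin; rewrite mem_undup inE gin orbT.
have eL : e \in L by rewrite mem_undup mem_head.
rewrite (merge_sum _ uL sub) in hz.
set F := fun h => mrg gs f h in hz.
have hF := mrgP hf.
pose H h := F h *~ denq q - (if h == e then a *~ numq q else 0).
have HR : forall h, h \in L -> Rg h (H h).
  move=> h _; apply: RgB; first by apply: RgMz; apply: hF.
  by case: eqP => [->|_]; [apply: RgMz|apply: Rg0].
have S0 : \sum_(h <- L) H h = 0.
  rewrite sumrB -big_mkcond /= sum_pred1_seq // -mulrz_suml -hz.
  by rewrite -!scaler_int scalerA (mulrC _ q) -numqE subrr.
have Fz : forall h, h \in L -> h != e -> F h = 0.
  move=> h hL ne; have := uniq_comp uL HR S0 hL.
  rewrite /H (negbTE ne) subr0; apply: zmodrat; exact: denq_neq0.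
rewrite hz (bigD1_seq e) //=.
have -> : \sum_(h <- L | h != e) F h = 0.
  by apply: big1_seq => h /andP [ne hL]; apply: Fz.
by rewrite addr0; apply: hF.
Qed.

Lemma supp_bound (l : seq gc) (a : gc -> R) : uniq l ->
  (forall g, g \in l -> Rg g (a g) /\ a g != 0) -> (size l <= \dim {:R})%N.
Proof.
move=> ul ha.
have fX : free (map_tuple a (in_tuple l)).
  apply/freeP => k hk i.
  pose kk (j : nat) : rat := oapp k 0 (insub j).
  pose F g := kk (index g l) *: a g.
  have S0 : \sum_(g <- l) F g = 0.
    rewrite (big_nth (gone G)) big_mkord -[RHS]hk; apply: eq_bigr => j _.
    rewrite /F index_uniq // /kk valK /= (nth_map (gone G)) //.
  have gl : nth (gone G) l i \in l by apply: mem_nth.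
  have := uniq_comp ul (fun g gl => RgZ _ (proj1 (ha g gl))) S0 gl.
  move/eqP; rewrite scaler_eq0 (negbTE (proj2 (ha _ gl))) orbF /kk index_uniq //.
  by rewrite valK => /eqP.
apply: leq_trans (dimvS (subvf <<map a l>>%VS)).
by move/eqP: fX => /= ->; rewrite size_map.
Qed.

Lemma Sup_ex : exists Sup : seq gc, uniq Sup /\
  forall g a, Rg g a -> a != 0 -> g \in Sup.
Proof.
pose P n := exists l : seq gc, [/\ uniq l, forall g, g \in l -> exists a, Rg g a /\ a != 0
   & size l = n].
have P0 : P 0%N by exists [::].
have bnd : forall n, P n -> (n <= \dim {:R})%N.
  move=> n [l [ul hl <-]].
  pose a g := if pselect (exists a, Rg g a /\ a != 0) is left h then projT1 (cid h) else 0.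
  apply: (@supp_bound l a) => // g gl; rewrite /a.
  case: pselect => [h|h]; first exact: (projT2 (cid h)).
  by case: h; apply: hl.
have [n [[l [ul hl sz]] mx]] := max_nat P0 bnd.
exists l; split => // g a ha a0; apply: contra_notT (fun h => h) => gnl.
have : P n.+1.
  exists (g :: l); split; rewrite /= ?gnl ?sz //.
  by move=> g'; rewrite inE => /orP [/eqP ->|]; [exists a|apply: hl].
by move/mx; rewrite ltnn.
Qed.

Definition Sup : seq gc := sval (cid Sup_ex).
Lemma Sup_uniq : uniq Sup. Proof. exact: (proj1 (svalP (cid Sup_ex))). Qed.
Lemma Sup_compl g a : Rg g a -> a != 0 -> g \in Sup.
Proof. exact: (proj2 (svalP (cid Sup_ex))). Qed.
Lemma Rg_notSup g a : Rg g a -> g \notin Sup -> a = 0.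
Proof. by move=> ha gn; apply/eqP; apply: contraNT gn; apply: Sup_compl. Qed.

Lemma decompSup w : exists h : gc -> R, (forall g, Rg g (h g)) /\ w = \sum_(g <- Sup) h g.
Proof.
have [gs [f [hf hw]]] := decomp0 w.
pose L := Sup ++ undup [seq g <- gs | g \notin Sup].
have uL : uniq L.
  rewrite cat_uniq Sup_uniq undup_uniq /= andbT; apply/hasPn => g.
  by rewrite mem_undup mem_filter => /andP [].
have sub : {subset gs <= L}.
  move=> g gin; rewrite mem_cat mem_undup mem_filter gin andbT.
  by case: (g \in Sup).
exists (mrg gs f); split; first exact: mrgP.
rewrite hw (merge_sum _ uL sub) big_cat /= [X in _ + X]big1_seq ?addr0 //.
move=> g /andP [_]; rewrite mem_undup mem_filter => /andP [gn _].
by apply: Rg_notSup gn; apply: mrgP.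
Qed.

Lemma decomp_uniq h h' : (forall g, Rg g (h g)) -> (forall g, Rg g (h' g)) ->
  \sum_(g <- Sup) h g = \sum_(g <- Sup) h' g -> forall g, h g = h' g.
Proof.
move=> hh hh' e g; case: (boolP (g \in Sup)) => gS; last first.
  by rewrite (Rg_notSup (hh g) gS) (Rg_notSup (hh' g) gS).
apply/eqP; rewrite -subr_eq0; apply/eqP.
apply: (uniq_comp (F := fun g => h g - h' g)) Sup_uniq _ _ _ gS.
  by move=> g' _; apply: RgB.
by rewrite sumrB e subrr.
Qed.

Definition pr (g : gc) (w : R) : R := sval (cid (decompSup w)) g.
Lemma pr_comp g w : Rg g (pr g w). Proof. exact: (proj1 (svalP (cid (decompSup w)))). Qed.
Lemma pr_sum w : w = \sum_(g <- Sup) pr g w.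
Proof. exact: (proj2 (svalP (cid (decompSup w)))). Qed.
Lemma prD g w w' : pr g (w + w') = pr g w + pr g w'.
Proof.
move: g; apply: (@decomp_uniq (fun g => pr g (w + w')) (fun g => pr g w + pr g w')).
- by move=> g; apply: pr_comp.
- by move=> g; apply: RgD; apply: pr_comp.
by rewrite -pr_sum big_split /= -!pr_sum.
Qed.
Lemma pr0 g : pr g 0 = 0.
Proof. by apply/esym/(addrI (pr g 0)); rewrite addr0 -prD addr0. Qed.
Lemma pr_hom g e a : Rg e a -> pr g a = if g == e then a else 0.
Proof.
move=> ha; case: (eqVneq a 0) => [->|a0]; first by rewrite pr0; case: eqP.
have eS := Sup_compl ha a0.
move: g; apply: (@decomp_uniq (fun g => pr g a) (fun g => if g == e then a else 0)).
  by move=> g; apply: pr_comp.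
  by move=> g; case: eqP => [->|_] //; apply: Rg0.
by rewrite -pr_sum -big_mkcond (sum_pred1_seq (fun _ => a) Sup_uniq eS).
Qed.

Lemma prod_grade g h a b : Rg g a -> Rg h b -> a * b != 0 ->
  exists k, gop g h = Some k /\ Rg k (a * b).
Proof.
case: hgr => _ _ _ _ H ha hb ab0.
have [|k [e hk]] := H g h; first by exists a, b; split => //; split => //; apply/eqP.
by exists k; split => //; apply: hk.
Qed.

Section Twist.
Variables (sig : R -> algC) (chi : gc -> algC).
Hypothesis hsig : is_ringhom sig.

Lemma sigD x y : sig (x + y) = sig x + sig y. Proof. by case: hsig. Qed.
Lemma sigM x y : sig (x * y) = sig x * sig y. Proof. by case: hsig. Qed.
Lemma sig1 : sig 1 = 1. Proof. by case: hsig. Qed.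
Lemma sig0 : sig 0 = 0.
Proof. by apply/esym/(addrI (sig 0)); rewrite addr0 -sigD addr0. Qed.

Definition tw (w : R) : algC := \sum_(g <- Sup) chi g * sig (pr g w).

Lemma twD x y : tw (x + y) = tw x + tw y.
Proof. by rewrite /tw -big_split; apply: eq_bigr => g _; rewrite prD sigD mulrDr. Qed.
Lemma tw0 : tw 0 = 0.
Proof. by rewrite /tw big1 // => g _; rewrite pr0 sig0 mulr0. Qed.
Lemma tw_sum (I : Type) (r : seq I) (F : I -> R) :
  tw (\sum_(i <- r) F i) = \sum_(i <- r) tw (F i).
Proof. by elim/big_rec2: _ => [|i y x _ <-]; rewrite ?tw0 // twD. Qed.
Lemma tw_hom e a : Rg e a -> tw a = chi e * sig a.
Proof.
move=> ha; case: (eqVneq a 0) => [->|a0]; first by rewrite tw0 sig0 mulr0.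
have eS := Sup_compl ha a0.
rewrite /tw (bigD1_seq e) //=.
have H := pr_hom e ha; rewrite H eqxx big1_seq ?addr0 //.
  by move=> g /andP [ne _]; have H' := pr_hom g ha; rewrite H' (negbTE ne) sig0 mulr0.
exact: Sup_uniq.
Qed.

Hypothesis chi1 : chi (gone G) = 1.
Hypothesis chiM : forall g h k a b, Rg g a -> Rg h b -> sig a != 0 -> sig b != 0 ->
  gop g h = Some k -> chi k = chi g * chi h.

Lemma tw_mul_hom g h a b : Rg g a -> Rg h b -> tw (a * b) = tw a * tw b.
Proof.
move=> ha hb; rewrite (tw_hom ha) (tw_hom hb).
case: (eqVneq (a * b) 0) => [ab0|ab0].
  by rewrite ab0 tw0 mulrACA -sigM ab0 sig0 mulr0.
have [k [ek hk]] := prod_grade ha hb ab0.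
rewrite (tw_hom hk) sigM mulrACA.
case: (eqVneq (sig a) 0) => [->|sa]; first by rewrite !(mulr0, mul0r).
case: (eqVneq (sig b) 0) => [->|sb]; first by rewrite !(mulr0, mul0r).
by rewrite (chiM ha hb sa sb ek).
Qed.

Lemma tw_ringhom : is_ringhom tw.
Proof.
split; first exact: twD.
  move=> x y; rewrite [in LHS](pr_sum x) [in LHS](pr_sum y) mulr_suml tw_sum.
  rewrite [in RHS](pr_sum x) [in RHS](pr_sum y) !tw_sum mulr_suml.
  apply: eq_bigr => g _; rewrite mulr_sumr tw_sum mulr_sumr; apply: eq_bigr => h _.
  by apply: tw_mul_hom; apply: pr_comp.
by rewrite (tw_hom Rg1) chi1 sig1 mulr1.
Qed.
End Twist.

Definition spec (P : gc -> Prop) (chi : gc -> algC) (gam del : gc) : Prop :=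
 [/\ chi (gone G) = 1,
     (forall g h k, P g -> P h -> gop g h = Some k -> chi k = chi g * chi h),
     (P gam -> P del -> gam <> del -> chi gam <> chi del) &
     exists N, (0 < N)%N /\ forall g, P g -> chi g ^+ N = 1].

Section GroupPart.
Variable sig : R -> algC.
Hypothesis hsig : is_ringhom sig.
Hypothesis hcomm : forall x y : R, x * y = y * x.

Definition Gp (g : gc) : Prop := exists a, Rg g a /\ sig a != 0.
Definition gmul (g h : gc) : gc := odflt (gone G) (gop g h).

Lemma prodG g h a b : Rg g a -> Rg h b -> sig a != 0 -> sig b != 0 ->
  [/\ gop g h = Some (gmul g h), Rg (gmul g h) (a * b) & sig (a * b) != 0].
Proof.
move=> ha hb sa sb.
have sab : sig (a * b) != 0 by rewrite (sigM hsig) mulf_neq0.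
have ab0 : a * b != 0 by apply: contraNneq sab => ->; rewrite (sig0 hsig).
have [k [ek hk]] := prod_grade ha hb ab0.
by rewrite /gmul ek.
Qed.

Lemma Gp_mul g h : Gp g -> Gp h -> Gp (gmul g h) /\ gop g h = Some (gmul g h).
Proof.
move=> [a [ha sa]] [b [hb sb]]; have [e1 e2 e3] := prodG ha hb sa sb.
by split => //; exists (a * b).
Qed.

Lemma Gp1 : Gp (gone G).
Proof. by exists 1; split; [exact: Rg1|rewrite (sig1 hsig) oner_neq0]. Qed.

Lemma Gp_Sup g : Gp g -> g \in Sup.
Proof.
move=> [a [ha sa]]; apply: (Sup_compl ha).
by apply: contraNneq sa => ->; rewrite (sig0 hsig).
Qed.

Lemma gmul1 g : gmul (gone G) g = g. Proof. by rewrite /gmul gop1s. Qed.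

Lemma gmulC g h : Gp g -> Gp h -> gmul g h = gmul h g.
Proof.
move=> [a [ha sa]] [b [hb sb]].
have [_ h1 s1] := prodG ha hb sa sb; have [_ h2 s2] := prodG hb ha sb sa.
apply: (@grade_uniq _ _ (a * b)) => //; first by apply: contraNneq s1 => ->; rewrite (sig0 hsig).
by rewrite hcomm.
Qed.

Lemma gmulA g h k : Gp g -> Gp h -> Gp k -> gmul (gmul g h) k = gmul g (gmul h k).
Proof.
move=> [a [ha sa]] [b [hb sb]] [c [hc sc]].
have [_ hab sab] := prodG ha hb sa sb.
have [_ hbc sbc] := prodG hb hc sb sc.
have [_ h1 s1] := prodG hab hc sab sc.
have [_ h2 s2] := prodG ha hbc sa sbc.
apply: (@grade_uniq _ _ (a * b * c)) => //; first by apply: contraNneq s1 => ->; rewrite (sig0 hsig).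
by rewrite -mulrA.
Qed.

Lemma gmul_idem g : Gp g -> gmul g g = g -> g = gone G.
Proof.
move=> [a [ha sa]] e; have [e1 _ _] := prodG ha ha sa sa.
by apply: gop_idem; rewrite e1 e.
Qed.

Definition Gl : seq gc := [seq g <- Sup | `[< Gp g >]].
Lemma Gl_Gp g : g \in Gl -> Gp g.
Proof. by rewrite mem_filter => /andP [/asboolP]. Qed.
Lemma Gp_Gl g : Gp g -> g \in Gl.
Proof. by move=> h; rewrite mem_filter Gp_Sup // andbT; apply/asboolP. Qed.

Definition TT := seq_sub Gl.
Definition mulT (t u : TT) : TT := insubd t (gmul (val t) (val u)).
Lemma valGp (t : TT) : Gp (val t). Proof. by apply: Gl_Gp; case: t. Qed.
Lemma mulT_val t u : val (mulT t u) = gmul (val t) (val u).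
Proof. by rewrite /mulT insubdK //; apply: Gp_Gl; case: (Gp_mul (valGp t) (valGp u)). Qed.
Definition oneT : TT := SeqSub (Gp_Gl Gp1).
Lemma mulTA : associative mulT.
Proof. by move=> x y z; apply: val_inj; rewrite !mulT_val gmulA //; apply: valGp. Qed.
Lemma mulT1 : left_id oneT mulT.
Proof. by move=> x; apply: val_inj; rewrite mulT_val gmul1. Qed.
Lemma mulTC : commutative mulT.
Proof. by move=> x y; apply: val_inj; rewrite !mulT_val gmulC //; apply: valGp. Qed.
Lemma idemT t : mulT t t = t -> t = oneT.
Proof.
move=> e; apply: val_inj; apply: gmul_idem; first exact: valGp.
by rewrite -mulT_val e.
Qed.
Definition invT (t : TT) : TT := sval (cid (fin_monoid_inv mulTA mulT1 mulTC idemT t)).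
Lemma mulTV : left_inverse oneT invT mulT.
Proof. by move=> t; rewrite /invT; case: (cid _). Qed.
Definition FG := FGrp mulTA mulT1 mulTV.

Lemma insub_Gp g (hg : Gp g) : insub g = Some (SeqSub (Gp_Gl hg) : TT).
Proof. case: insubP => [u _ e|]; last by rewrite (Gp_Gl hg). by congr Some; apply: val_inj. Qed.

Lemma spec_ex gam del : exists chi : gc -> algC, spec Gp chi gam del.
Proof.
case: (pselect (Gp gam /\ Gp del /\ gam <> del)) => [[hg [hd nd]]|nh]; last first.
  exists (fun _ => 1); split => //; first by move=> *; rewrite mulr1.
    by move=> hg hd nd; case: nh.
  by exists 1%N; split => // g _; rewrite expr1.
pose tg : TT := SeqSub (Gp_Gl hg).
pose td : TT := SeqSub (Gp_Gl hd).
pose x0 : fcar FG := mulT tg (invT td).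
have x01 : x0 <> fone FG.
  move=> e; apply: nd.
  have : mulT x0 td = tg by rewrite /x0 -mulTA mulTV mulTC mulT1.
  by rewrite e /= mulT1 => /(congr1 val) /= ->.
have FC : commutative (@fmul FG) by exact: mulTC.
have [chiT [c1 [cM [cx [N [N0 cN]]]]]] := fgrp_char FC x01.
exists (fun g => if insub g is Some t then chiT t else 1); split.
- by rewrite (insub_Gp Gp1); exact: c1.
- move=> g h k pg ph e; rewrite (insub_Gp pg) (insub_Gp ph).
  have [pk ek] := Gp_mul pg ph; rewrite e in ek; case: ek => ->.
  rewrite (insub_Gp pk); rewrite -cM; congr chiT; apply: val_inj.
  by rewrite /= mulT_val.
- move=> pg pd _; rewrite (insub_Gp pg) (insub_Gp pd).
  have -> : SeqSub (Gp_Gl pg) = tg by apply: val_inj.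
  have -> : SeqSub (Gp_Gl pd) = td by apply: val_inj.
  move=> e; apply: cx; rewrite /x0 (cM tg) e -(cM td).
  have -> : fmul (f:=FG) td (invT td) = fone FG by rewrite /= mulTC mulTV.
  exact: c1.
- exists N; split => // g pg; rewrite (insub_Gp pg); exact: cN.
Qed.

End GroupPart.

Section Ortho.
Hypothesis hcomm : forall x y : R, x * y = y * x.
Variables (gam del : gc).

Definition chiOf (P : gc -> Prop) : gc -> algC :=
  if pselect (exists chi, spec P chi gam del) is left h then sval (cid h) else fun _ => 1.

Lemma chiOf_spec sig : is_ringhom sig -> spec (Gp sig) (chiOf (Gp sig)) gam del.
Proof.
move=> hs; rewrite /chiOf; case: pselect => [h|h]; first exact: (svalP (cid h)).
by case: h; apply: spec_ex.
Qed.

Definition uk (k : nat) (sig : R -> algC) : R -> algC :=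
  tw sig (fun g => chiOf (Gp sig) g ^+ k).

Lemma uk_hom k sig : is_ringhom sig -> is_ringhom (uk k sig).
Proof.
move=> hs; have [c1 cM _ _] := chiOf_spec hs.
apply: tw_ringhom => //; first by rewrite c1 expr1n.
move=> g h k' a b ha hb sa sb e.
by rewrite (cM g h k') ?exprMn //; [exists a|exists b].
Qed.

Lemma uk_val k sig e a : is_ringhom sig -> Rg e a ->
  uk k sig a = chiOf (Gp sig) e ^+ k * sig a.
Proof. by move=> hs ha; rewrite /uk (tw_hom _ hs ha). Qed.

Lemma chi_neq0 sig g : is_ringhom sig -> Gp sig g -> chiOf (Gp sig) g != 0.
Proof.
move=> hs pg; have [_ _ _ [N [N0 hN]]] := chiOf_spec hs.
apply/eqP => e; have := hN g pg; rewrite e expr0n eqn0Ngt N0 /= => /eqP.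
by rewrite eq_sym oner_eq0.
Qed.

Lemma Gp_uk k sig : is_ringhom sig -> Gp (uk k sig) = Gp sig.
Proof.
move=> hs; apply: funext => g; apply: propext; split.
  move=> [a [ha sa]]; exists a; split => //.
  by move: sa; rewrite (uk_val k hs ha) mulf_eq0 negb_or => /andP [].
move=> pg; have [a [ha sa]] := pg; exists a; split => //.
by rewrite (uk_val k hs ha) mulf_neq0 // expf_neq0 // chi_neq0.
Qed.

Lemma uk_inj k sig sig' : is_ringhom sig -> is_ringhom sig' ->
  uk k sig =1 uk k sig' -> sig =1 sig'.
Proof.
move=> hs hs' e1; have e : uk k sig = uk k sig' by apply: funext.
have eG : Gp sig = Gp sig' by rewrite -(Gp_uk k hs) e Gp_uk.
move=> w; rewrite (pr_sum w) !hom_sum //; apply: eq_bigr => g _.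
set a := pr g w; have ha : Rg g a := pr_comp g w.
have := e1 a; rewrite (uk_val k hs ha) (uk_val k hs' ha) -eG.
case: (eqVneq (chiOf (Gp sig) g ^+ k) 0) => [c0|c0]; last by move/(mulfI c0).
move=> _.
have s0 : sig a = 0.
  apply: contra_eq c0 => sa; rewrite expf_neq0 // chi_neq0 //; exists a; split => //.
have s0' : sig' a = 0.
  apply: contra_eq c0 => sa; rewrite expf_neq0 // eG chi_neq0 //; exists a; split => //.
by rewrite s0 s0'.
Qed.

Lemma common_N (s : seq (R -> algC)) : (forall f, List.In f s -> is_ringhom f) ->
  exists M, (0 < M)%N /\ forall f, List.In f s -> forall g, Gp f g -> chiOf (Gp f) g ^+ M = 1.
Proof.
elim: s => [|f s IH] hs; first by exists 1%N.
have [|M [M0 hM]] := IH; first by move=> g gs; apply: hs; right.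
have [_ _ _ [N [N0 hN]]] := chiOf_spec (hs f (or_introl erefl)).
exists (N * M)%N; split; first by rewrite muln_gt0 N0.
move=> f' [<-|f's] g pg.
  by rewrite exprM hN // expr1n.
by rewrite mulnC exprM hM // expr1n.
Qed.

Lemma ortho (s : seq (R -> algC)) (hs : hom_enum s) x y : gam <> del ->
  Rg gam x -> Rg del y -> trace_pairing s x y = 0.
Proof.
move=> nd hx hy; rewrite /trace_pairing.
set S := \sum_(f <- s) f x * (f y)^*.
have hh : forall f, List.In f s -> is_ringhom f by case: hs.
have [M [M0 hM]] := common_N hh.
pose c f := chiOf (Gp f) gam * (chiOf (Gp f) del)^*.
have step : forall k, S = \sum_(f <- s) c f ^+ k * (f x * (f y)^*).
  move=> k; rewrite /S -(@sum_perm_homs _ s hs (uk k) (fun f => f x * (f y)^*)).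
  - rewrite big_seq_cond [RHS]big_seq_cond; apply: eq_bigr => f /andP [fs _].
    have hf : is_ringhom f by apply: hh; apply/InP.
    rewrite (uk_val k hf hx) (uk_val k hf hy) /c rmorphM rmorphXn exprMn.
    by rewrite mulrACA mulrA.
  - by move=> f hf; apply: uk_hom.
  - by move=> f f' hf hf'; apply: uk_inj.
  - by move=> f f' e; rewrite !e.
have SM : S *+ M = 0.
  have -> : S *+ M = \sum_(k < M) \sum_(f <- s) c f ^+ k * (f x * (f y)^*).
    by rewrite -[in LHS](card_ord M) -sumr_const; apply: eq_bigr => k _; apply: step.
  rewrite exchange_big /=.
  rewrite big_seq_cond big1 // => f /andP [fs _].
  have hf : is_ringhom f by apply: hh; apply/InP.
  rewrite -mulr_suml.
  case: (eqVneq (f x * (f y)^*) 0) => [->|nz]; first by rewrite mulr0.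
  have fx0 : f x != 0 by apply: contraNneq nz => ->; rewrite mul0r.
  have fy0 : f y != 0 by apply: contraNneq nz => ->; rewrite conjC0 mulr0.
  have pg : Gp f gam by exists x.
  have pd : Gp f del by exists y.
  have [_ _ cd _] := chiOf_spec hf.
  have fs' : List.In f s by apply/InP.
  have hMg := hM f fs' gam pg.
  have hMd := hM f fs' del pd.
  rewrite geom0 ?mul0r //.
    by rewrite /c exprMn -rmorphXn hMg hMd rmorph1 mulr1.
  apply/eqP => c1; apply: (cd pg pd nd).
  have ud := unit_conj M0 hMd.
  have e2 : c f * chiOf (Gp f) del = chiOf (Gp f) del by rewrite c1 mul1r.
  by rewrite -e2 /c -mulrA [_^* * _]mulrC ud mulr1.
move/eqP: SM; rewrite -mulr_natr mulf_eq0 pnatr_eq0 eqn0Ngt M0 orbF.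
by move/eqP.
Qed.
End Ortho.
End Grading.

Lemma prim_elem (K : fieldExtType rat) : exists z : K, <<1; z>>%VS = fullv.
Proof.
have sep : forall (E : {subfield K}) (x : K), separable_element E x.
  move=> E x; apply: pcharf0_separable => p; rewrite pchar_lalg; exact: pchar_num.
have ex : forall xs : seq K, exists z : K, <<1 & xs>>%VS = <<1; z>>%VS.
  elim/last_ind => [|xs x [z ez]]; first by exists 0; rewrite Fadjoin_nil Fadjoin0.
  rewrite adjoin_rcons ez.
  have [z' ez'] := Primitive_Element_Theorem x (sep 1%AS z).
  by exists z'.
have [z ez] := ex (vbasis fullv); exists z; rewrite -ez.
apply/eqP; rewrite eqEsubv subvf /=.
rewrite -{1}(span_basis (vbasisP fullv)); apply/span_subvP.
exact: seqv_sub_adjoin.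
Qed.

Lemma embed_ex (K : fieldExtType rat) : exists tau : K -> algC, is_ringhom tau.
Proof.
have [z ez] := prim_elem K.
have rep : forall y : K, exists q : {poly rat}, y = (map_poly (in_alg K) q).[z].
  by move=> y; apply/Fadjoin1_polyP; rewrite ez memvf.
have [p ep] : exists p : {poly rat}, minPoly 1 z = map_poly (in_alg K) p.
  by apply/polyOver1P; exact: minPolyOver.
have szp : size (map_poly ratr p : {poly algC}) != 1%N.
  rewrite size_map_poly -(size_map_poly (in_alg K)) -ep.
  have := root_size_gt1 (monic_neq0 (monic_minPoly 1 z)) (root_minPoly 1 z).
  by case: (size _) => [|[|n]].
have [b rb] := closed_rootP _ szp.
have kill : forall q : {poly rat}, (map_poly (in_alg K) q).[z] = 0 ->
    (map_poly ratr q).[b] = 0.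
  move=> q qz.
  have : minPoly 1 z %| map_poly (in_alg K) q.
    by apply: minPoly_dvdp; [apply/polyOver1P; exists q|apply/rootP].
  rewrite ep dvdp_map => /dvdpP [r ->].
  by rewrite rmorphM /= hornerM (rootP rb) mulr0.
pose tau y := (map_poly ratr (sval (cid (rep y)))).[b].
have tauE : forall q, tau ((map_poly (in_alg K) q).[z]) = (map_poly ratr q).[b].
  move=> q; rewrite /tau; case: cid => q' /= e.
  apply/eqP; rewrite -subr_eq0 -hornerN -hornerD -rmorphN -rmorphD; apply/eqP; apply: kill.
  by rewrite rmorphD rmorphN hornerD hornerN -e subrr.
exists tau; split.
- move=> x y; have [qx ->] := rep x; have [qy ->] := rep y.
  by rewrite -hornerD -rmorphD !tauE rmorphD hornerD.
- move=> x y; have [qx ->] := rep x; have [qy ->] := rep y.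
  by rewrite -hornerM -rmorphM !tauE rmorphM hornerM.
- have -> : (1 : K) = (map_poly (in_alg K) 1).[z] by rewrite rmorph1 hornerC.
  by rewrite tauE rmorph1 hornerC.
Qed.

Lemma hom_basic (A : falgType rat) (f : A -> algC) : is_ringhom f ->
  [/\ f 0 = 0, forall x, f (- x) = - f x & forall z : int, f (z%:~R) = z%:~R].
Proof.
case=> fD fM f1.
have f0 : f 0 = 0 by apply/esym/(addrI (f 0)); rewrite addr0 -fD addr0.
have fN : forall x, f (- x) = - f x.
  by move=> x; apply: (addrI (f x)); rewrite -fD !subrr.
have fn : forall n : nat, f n%:R = n%:R.
  by elim=> [|n IH]; rewrite ?f0 // -addn1 !natrD fD IH f1.
split => // -[n|n]; first exact: fn.
by rewrite NegzE !mulrNz fN -!pmulrn fn.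
Qed.

Lemma hom_ratZ (A : falgType rat) (f : A -> algC) : is_ringhom f ->
  forall (q : rat) w, f (q *: w) = ratr q * f w.
Proof.
move=> hf q w; have [f0 fN fz] := hom_basic hf; case: hf => fD fM f1.
rewrite -mulr_algl fM; congr (_ * _).
have dq : (denq q)%:~R != 0 :> algC by rewrite intr_eq0 denq_neq0.
have e : f (q%:A) * (denq q)%:~R = (numq q)%:~R.
  have h1 : (q%:A : A) * (denq q)%:~R = (numq q)%:~R.
    by rewrite mulr_algl -scaler_int scalerA -numqE scaler_int.
  by rewrite -(fz (denq q)) -fM h1 fz.
by rewrite /ratr -e mulfK.
Qed.

Lemma dedekind (A : falgType rat) (d : A -> algC) (s : seq (A -> algC)) :
  (forall f, List.In f s -> is_ringhom f) ->
  (forall i j, (i < j < size s)%N -> exists x, nth d s i x <> nth d s j x) ->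
  forall v : nat -> algC, (forall w, \sum_(i < size s) v i * nth d s i w = 0) ->
  forall i, (i < size s)%N -> v i = 0.
Proof.
elim: s => [|f s IH] hh hd v rel i //= ilt.
have hf := hh f (or_introl erefl).
have hh' : forall g, List.In g s -> is_ringhom g by move=> g gs; apply: hh; right.
have hd' : forall i j, (i < j < size s)%N -> exists x, nth d s i x <> nth d s j x.
  by move=> i' j' h; apply: (hd i'.+1 j'.+1).
have rel2 : forall w, \sum_(i < size s) v i.+1 * nth d s i w = - (v 0%N * f w).
  move=> w; have := rel w; rewrite big_ord_recl /= => /eqP.
  by rewrite addrC addr_eq0 => /eqP.
have tail0 : forall j, (j < size s)%N -> v j.+1 = 0.
  move=> j jlt; have [z hz] := hd 0%N j.+1 jlt.
  pose v' i := v i.+1 * (nth d s i z - f z).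
  have rel' : forall w, \sum_(i < size s) v' i * nth d s i w = 0.
    move=> w; rewrite /v'.
    transitivity (\sum_(i < size s) v i.+1 * nth d s i (z * w)
                 - f z * \sum_(i < size s) v i.+1 * nth d s i w).
      rewrite mulr_sumr -sumrB; apply: eq_bigr => k _.
      have [_ hM _] := hh' _ (nth_In d (ltn_ord k)).
      by rewrite hM; ring.
    have [_ fM _] := hf.
    by rewrite !rel2 fM; ring.
  have := IH hh' hd' v' rel' j jlt; rewrite /v' => /eqP.
  rewrite mulf_eq0 subr_eq0 => /orP [/eqP //|/eqP e].
  by case: hz; rewrite /= e.
case: i ilt => [_|j jlt]; last exact: tail0.
have := rel 1; rewrite big_ord_recl big1 ?addr0 /=.
  by have [_ _ ->] := hf; rewrite mulr1.
by move=> i _; rewrite tail0 ?mul0r.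
Qed.

Lemma hom_count (A : falgType rat) (d : A -> algC) (s : seq (A -> algC)) :
  (forall f, List.In f s -> is_ringhom f) ->
  (forall i j, (i < j < size s)%N -> exists x, nth d s i x <> nth d s j x) ->
  (size s <= \dim {:A})%N.
Proof.
move=> hh hd.
pose b := vbasis {:A}.
pose Mx : 'M[algC]_(size s, \dim {:A}) := \matrix_(i, j) nth d s i (tnth b j).
have : row_free Mx.
  apply: inj_row_free => v hv; apply/rowP => i; rewrite mxE.
  pose v' (k : nat) : algC := oapp (fun k' => v 0 k') 0 (insub k).
  have -> : v 0 i = v' i by rewrite /v' valK.
  apply: (dedekind hh hd) => // w.
  rewrite (coord_vbasis (memvf w)).
  transitivity (\sum_(j < \dim {:A}) ratr (coord b j w) * (v *m Mx) 0 j); last first.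
    by rewrite hv big1 // => j _; rewrite mxE mulr0.
  transitivity (\sum_(k < size s) \sum_(j < \dim {:A})
      ratr (coord b j w) * (v' k * nth d s k (b`_j))).
    apply: eq_bigr => k _; rewrite hom_sum; last by apply: hh; apply: nth_In.
    rewrite mulr_sumr; apply: eq_bigr => j _.
    rewrite (hom_ratZ (hh _ (nth_In d (ltn_ord k)))); ring.
  rewrite exchange_big /=; apply: eq_bigr => j _; rewrite mxE mulr_sumr.
  apply: eq_bigr => k _; rewrite mxE /v' valK /= (tnth_nth 0).
  by [].
by move/eqP => <-; apply: rank_leq_col.
Qed.

Lemma In_rcons (T : Type) (s : seq T) (x g : T) : List.In g (rcons s x) -> List.In g s \/ g = x.
Proof.
elim: s => [|y s IH] /=; first by case=> [->|[]]; right.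
by case=> [->|/IH [h|h]]; [left; left|left; right|right].
Qed.

Lemma enum_ex (A : falgType rat) : exists s : seq (A -> algC), hom_enum s.
Proof.
pose d := fun _ : A => 0 : algC.
pose P n := exists s : seq (A -> algC), [/\ forall f, List.In f s -> is_ringhom f,
  (forall i j, (i < j < size s)%N -> exists x, nth d s i x <> nth d s j x) & size s = n].
have P0 : P 0%N.
  exists [::]; split; [by move=> f [] | by move=> i j /andP [] | by []].
have bnd : forall n, P n -> (n <= \dim {:A})%N.
  by move=> n [s [hh hd <-]]; apply: (hom_count hh hd).
have [n [[s [hh hd sz]] mx]] := max_nat P0 bnd.
exists s; split => //.
move=> f hf; case: (pselect (exists2 g, List.In g s & forall x, f x = g x)) => // nex.
have : P n.+1.
  exists (rcons s f); split; last by rewrite size_rcons sz.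
  - by move=> g hg; case: (In_rcons hg) => [h|->] //; apply: hh.
  move=> i j; rewrite size_rcons ltnS => /andP [ij]; rewrite leq_eqVlt => /orP [/eqP ej|jlt].
    have il : (i < size s)%N by rewrite -ej.
    rewrite !nth_rcons il ej ltnn eqxx.
    case: (pselect (exists x, nth d s i x <> f x)) => [//|nx].
    case: nex; exists (nth d s i); first exact: nth_In.
    move=> x; case: (pselect (f x = nth d s i x)) => // h; case: nx; exists x => e; apply: h; by rewrite e.
  rewrite !nth_rcons jlt (ltn_trans ij jlt).
  by apply: hd; rewrite ij jlt.
by move/mx; rewrite ltnn.
Qed.


Lemma ringhom0 (A B : nzRingType) (f : A -> B) : is_ringhom f -> f 0 = 0.
Proof. by case=> fD _ _; apply/esym/(addrI (f 0)); rewrite addr0 -fD addr0. Qed.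

Lemma big1_In (T : Type) (s : seq T) (F : T -> algC) :
  (forall f, List.In f s -> F f = 0) -> \sum_(f <- s) F f = 0.
Proof.
elim: s => [|f s IH] h; first by rewrite big_nil.
by rewrite big_cons h ?IH ?addr0 //; [move=> g gs; apply: h; right|left].
Qed.

Theorem mainTheorem8 (R : falgType rat) (G : grid) (Rg : gcarrier G -> R -> Prop)
  (hR : iso_prod_number_fields R) (hgr : grid_grading Rg) :
  (exists s : seq (R -> algC), hom_enum s) /\
  forall s : seq (R -> algC), hom_enum s ->
  forall gam del : gcarrier G,
    (forall x y : R, Rg gam x -> Rg del y -> trace_pairing s x y = 0) <->
    (gam <> del \/ forall x : R, Rg gam x -> x = 0).
Proof.
have [n [K [phi [hphi hinj hsurj]]]] := hR.
have hcomm : forall x y : R, x * y = y * x.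
  by move=> x y; apply: hinj => i; have [_ hM _] := hphi i; rewrite !hM mulrC.
have sep : forall x : R, x != 0 -> exists sig : R -> algC, is_ringhom sig /\ sig x != 0.
  move=> x x0.
  have [i pi] : exists i, phi i x != 0.
    case: (pselect (exists i, phi i x != 0)) => // nh; case/eqP: x0; apply: hinj => i.
    rewrite (ringhom0 (hphi i)); apply/eqP; apply: contraT => h; case: nh; exists i; exact: h.
  have [tau htau] := embed_ex (K i).
  have [pD pM p1] := hphi i; have [tD tM t1] := htau.
  exists (fun w => tau (phi i w)); split; first split.
  - by move=> a b; rewrite pD tD.
  - by move=> a b; rewrite pM tM.
  - by rewrite p1 t1.
  apply/eqP => t0; have := t1; rewrite -(mulfV pi) tM t0 mul0r => /eqP.
  by rewrite eq_sym oner_eq0.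
split; first exact: enum_ex.
move=> s hs gam del; have hh : forall f, List.In f s -> is_ringhom f by case: hs.
split.
- move=> h; case: (pselect (gam = del)) => [e|ne]; last by left.
  right; subst del => x hx; case: (eqVneq x 0) => // x0; exfalso.
  have [sig [hsig sx]] := sep x x0.
  have [g gs eg] := (match hs with And3 _ _ hc => hc end) sig hsig.
  have [j [js ej]] := In_nth_ex (fun _ => 0) gs.
  have := h x x hx hx; rewrite /trace_pairing (big_nth (fun _ => 0)) big_mkord.
  move/eqP; rewrite psumr_eq0 => [|i _]; last exact: mul_conjC_ge0.
  move/allP => /(_ (Ordinal js) (mem_index_enum _)) /=; rewrite ej mul_conjC_eq0 -eg.
  by rewrite (negbTE sx).
- case=> [ne|z]; first by move=> x y hx hy; apply: (ortho hgr hcomm hs ne hx hy).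
  move=> x y hx hy; rewrite (z x hx) /trace_pairing big1_In // => f fs.
  by rewrite (ringhom0 (hh f fs)) mul0r.
Qed.
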